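(* Let $\Omega\subset\mathbb{R}^n$ be a bounded convex domain with smooth boundary and outer unit normal $\nu$, let $\vec f:\Omega\times\mathbb{R}\times[0,\infty)\to\mathbb{R}^{n+1}$, and let $u$ be a classical solution, $C^2$ up to $\partial\Omega$ in space for each $t>0$, of \[ \frac{\partial_t u}{\sqrt{1+|du|^2}}=\operatorname{div}\Big(\frac{du}{\sqrt{1+|du|^2}}\Big)+\vec f(x,u,t)\cdot\vec n\ \text{ in }\Omega,\ t>0,\qquad du\cdot\nu|_{\partial\Omega}=0,\ t>0, \] with $\vec n=\frac{1}{\sqrt{1+|du|^2}}(-du,1)$. Let $v:=\sqrt{1+|du|^2}$. Then for all $t>0$, \[ (D_{\Gamma_t}v\cdot\vec\nu)\big|_{\partial(\Omega\times\mathbb{R})}\le 0 . \]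
   Context: $\Gamma_t=\{(x,u(x,t)):x\in\Omega\}$. $v$ is regarded as a function on $\Omega\times\mathbb{R}$ independent of $x_{n+1}$, $D$ is the gradient in $\mathbb{R}^{n+1}$, and $D_{\Gamma_t}v:=Dv-(Dv\cdot\vec n)\vec n$ is its tangential gradient along $\Gamma_t$. $\vec\nu=(\nu,0)$ is the outer unit normal of the cylinder $\Omega\times\mathbb{R}$; the inequality is evaluated at the boundary points $(x,u(x,t))$, $x\in\partial\Omega$. *)

(* Defs.v *)
From HB Require Import structures.
From mathcomp Require Import all_boot all_order all_algebra.
From mathcomp Require Import all_classical all_reals all_analysis.
Set Implicit Arguments. Unset Strict Implicit. Unset Printing Implicit Defensive.
Import Order.TTheory GRing.Theory Num.Theory.
Import numFieldNormedType.Exports.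
Local Open Scope classical_set_scope.
Local Open Scope ring_scope.

Section Defs.
Variable R : realType.

Definition evec (n : nat) (i : 'I_n) : 'rV[R]_n := delta_mx 0 i.

Definition dotv (m : nat) (a b : 'rV[R]_m) : R := \sum_(i < m) a 0 i * b 0 i.

Definition pd (n : nat) (i : 'I_n) (g : 'rV[R]_n -> R) : 'rV[R]_n -> R :=
  fun x => derive g x (evec i).

Definition grad (n : nat) (g : 'rV[R]_n -> R) (x : 'rV[R]_n) : 'rV[R]_n :=
  \row_i pd i g x.

Definition divg (n : nat) (F : 'rV[R]_n -> 'rV[R]_n) (x : 'rV[R]_n) : R :=
  \sum_(i < n) pd i (fun y => F y 0 i) x.

Fixpoint Ck_on (n : nat) (U : set 'rV[R]_n) (k : nat) (g : 'rV[R]_n -> R) : Prop :=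
  match k with
  | 0 => forall x, U x -> {for x, continuous g}
  | k.+1 => (forall x, U x -> differentiable g x) /\
            (forall i, Ck_on U k (pd i g))
  end.

Definition smooth (n : nat) (g : 'rV[R]_n -> R) : Prop :=
  forall k, Ck_on setT k g.

(* Omega = {rho < 0}, a smooth bounded convex domain with global
   smooth defining function rho (grad rho <> 0 on {rho = 0} = boundary) *)
Definition Omega (n : nat) (rho : 'rV[R]_n -> R) : set 'rV[R]_n :=
  [set x | rho x < 0].

Definition bdry (n : nat) (rho : 'rV[R]_n -> R) : set 'rV[R]_n :=
  [set x | rho x = 0].

Definition convex_dom (n : nat) (S : set 'rV[R]_n) : Prop :=
  forall x y, S x -> S y -> forall l : R, 0 <= l -> l <= 1 ->
    S ((1 - l) *: x + l *: y).

Definition bounded_dom (n : nat) (S : set 'rV[R]_n) : Prop :=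
  exists M : R, forall x, S x -> dotv x x <= M.

Definition smooth_bounded_convex_domain (n : nat) (rho : 'rV[R]_n -> R) : Prop :=
  [/\ smooth rho,
      (forall x, rho x = 0 -> grad rho x != 0),
      Omega rho !=set0,
      convex_dom (Omega rho) &
      bounded_dom (Omega rho)].

Definition onormal (n : nat) (rho : 'rV[R]_n -> R) (x : 'rV[R]_n) : 'rV[R]_n :=
  (Num.sqrt (dotv (grad rho x) (grad rho x)))^-1 *: grad rho x.

Definition du (n : nat) (u : 'rV[R]_n -> R -> R) (x : 'rV[R]_n) (t : R) : 'rV[R]_n :=
  grad (fun y => u y t) x.

Definition vfun (n : nat) (u : 'rV[R]_n -> R -> R) (x : 'rV[R]_n) (t : R) : R :=
  Num.sqrt (1 + dotv (du u x t) (du u x t)).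

Definition nvec (n : nat) (u : 'rV[R]_n -> R -> R) (x : 'rV[R]_n) (t : R) : 'rV[R]_(n + 1) :=
  (vfun u x t)^-1 *: row_mx (- du u x t) (const_mx 1).

(* D v in R^{n+1}, v regarded as independent of x_{n+1} *)
Definition Dv (n : nat) (u : 'rV[R]_n -> R -> R) (x : 'rV[R]_n) (t : R) : 'rV[R]_(n + 1) :=
  row_mx (grad (fun y => vfun u y t) x) 0.

Definition DGamma_v (n : nat) (u : 'rV[R]_n -> R -> R) (x : 'rV[R]_n) (t : R) : 'rV[R]_(n + 1) :=
  Dv u x t - dotv (Dv u x t) (nvec u x t) *: nvec u x t.

(* outer unit normal (nu, 0) of the cylinder Omega x R *)
Definition cyl_normal (n : nat) (rho : 'rV[R]_n -> R) (x : 'rV[R]_n) : 'rV[R]_(n + 1) :=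
  row_mx (onormal rho x) 0.

End Defs.

(* Main.v *)
Require Import Defs.
From HB Require Import structures.
From mathcomp Require Import all_boot all_order all_algebra.
From mathcomp Require Import all_classical all_reals all_analysis.
From mathcomp Require Import ring lra.
Import Order.TTheory GRing.Theory Num.Theory.
Import numFieldNormedType.Exports.
Local Open Scope classical_set_scope.
Local Open Scope ring_scope.
Section S.
Variable R : realType.

Lemma LINE (V : normedModType R) (f : V -> R) y b r0 :
  derivable f (y + r0 *: b) b ->
  is_derive r0 1 (fun r : R => f (y + r *: b)) ('D_b f (y + r0 *: b)).
Proof.
move=> H.
have E : (fun h : R => h^-1 *: (((fun r : R => f (y + r *: b)) \o shift r0) (h *: 1)
           - (fun r : R => f (y + r *: b)) r0)) =
         (fun h => h^-1 *: ((f \o shift (y + r0 *: b)) (h *: b) - f (y + r0 *: b))).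
  apply/funext => h /=; congr (_ *: (f _ - _)).
  by rewrite /shift /= -[h%:A]/(h * 1) mulr1 scalerDl addrCA addrA.
have D1 : derivable (fun r : R => f (y + r *: b)) r0 1 by rewrite /derivable E.
split => //; by rewrite /derive E.
Qed.

Lemma DEC n (f : 'rV[R]_n -> R) x v : differentiable f x ->
  'D_v f x = \sum_(j < n) v 0 j * pd j f x.
Proof.
move=> df; rewrite deriveE // {1}(row_sum_delta v) linear_sum.
apply: eq_bigr => j _; rewrite linearZ /= /pd deriveE //.
Qed.
Lemma EPS1 (V : normedModType R) (f : V -> R) a v : derivable f a v ->
  forall e, 0 < e -> exists2 d, 0 < d &
  forall h : R, `|h| < d -> `|f (a + h *: v) - f a - h * 'D_v f a| <= e * `|h|.
Proof.
move=> df e e0.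
have H := derivable_nbhsx df.
have H2 : (fun h : R => f (a + h *: v)) = (fun h => f a + h *: 'D_v f a) +o_ (nbhs (0:R)) id.
  apply/eqaddoE; rewrite funeqE => h; exact: H.
move/eqaddoP: H2 => /(_ e e0) /nbhs_norm0P [d d0 Hd].
exists d => // z zd; have := Hd z zd => /=.
by rewrite opprD addrA.
Qed.

Arguments EPS1 {V f a v}.
Arguments LINE {V f y b r0}.
Arguments DEC {n f x v}.
Lemma CONV (V : normedModType R) (rho : V -> R) x tau :
 (forall y, differentiable rho y) ->
 (forall y z l, rho y < 0 -> rho z < 0 -> 0 <= l -> l <= 1 ->
    rho ((1-l) *: y + l *: z) < 0) ->
 rho x = 0 -> 'D_tau rho x = 0 ->
 derivable (fun y => 'D_tau rho y) x tau ->
 0 <= 'D_tau (fun y => 'D_tau rho y) x.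
Proof.
move=> drho cvx rx0 G0 dG.
set D := 'D_tau (fun y => 'D_tau rho y) x.
rewrite leNgt; apply/negP => Dlt0.
have [d d0 Hd] := EPS1 dG (- D / 2) ltac:(by rewrite divr_gt0 // oppr_gt0).
set g := fun r : R => rho (x + r *: tau).
have gd : forall r : R, is_derive r 1 g ('D_tau rho (x + r *: tau)).
  by move=> r; apply: LINE; apply: diff_derivable.
have gc : forall a b : R, {within `[a, b], continuous g}.
  move=> a b; apply: derivable_within_continuous => r _.
  by have [] := gd r.
set s := d / 2.
have s0 : 0 < s by rewrite divr_gt0.
have sd : s < d by rewrite /s ltr_pdivrMr // ltr_pMr // ltr1n.
have g0 : g 0 = 0 by rewrite /g scale0r addr0.
have Gneg : forall c, 0 < c < d -> 'D_tau rho (x + c *: tau) < 0.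
  move=> c /andP [c0 cd].
  have := Hd c; rewrite gtr0_norm // => /(_ cd).
  rewrite G0 subr0 => /ler_normlP [_ H].
  rewrite -(subrK (c * D) ('D_tau rho (x + c *: tau))).
  apply: (le_lt_trans (lerD H (lexx _))).
  have -> : - D / 2 * c + c * D = c * (D / 2) by field.
  by rewrite pmulr_rlt0 // pmulr_llt0 // invr_gt0 ltr0n.
have Gpos : forall c, - d < c < 0 -> 0 < 'D_tau rho (x + c *: tau).
  move=> c /andP [cd c0].
  have := Hd c; rewrite ltr0_norm // => /(_ ltac:(by rewrite ltrNl)).
  rewrite G0 subr0 => /ler_normlP [H _].
  rewrite -(subrK (c * D) ('D_tau rho (x + c *: tau))).
  have H' : - (- D / 2 * - c) + c * D <= 'D_tau rho (x + c *: tau) - c * D + c * D.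
    by rewrite lerD2r lerNl.
  apply: (lt_le_trans _ H').
  have -> : - (- D / 2 * - c) + c * D = c * (D / 2) by field.
  by rewrite nmulr_rgt0 // pmulr_llt0 // invr_gt0 ltr0n.
have [c1 c1i E1] := MVT s0 (fun r _ => gd r) (gc 0 s).
have sneg : - s < 0 by rewrite oppr_lt0.
have [c2 c2i E2] := MVT sneg (fun r _ => gd r) (gc (- s) 0).
have gs : g s < 0.
  move: E1; rewrite g0 subr0 subr0 => ->.
  rewrite pmulr_llt0 //; apply: Gneg; move: c1i; rewrite in_itv /= => /andP [-> ].
  by move=> h; apply: lt_trans h sd.
have gms : g (- s) < 0.
  have -> : g (- s) = - ('D_tau rho (x + c2 *: tau) * s).
    by move: E2; rewrite g0 sub0r opprK; lra.
  rewrite oppr_lt0 pmulr_lgt0 //; apply: Gpos; move: c2i; rewrite in_itv /= => /andP [h ->].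
  by rewrite andbT; apply: lt_trans h; rewrite ltrN2.
have := cvx _ _ (1/2) gs gms ltac:(by []) ltac:(by rewrite ler_pdivrMr // mul1r ler1n).
have -> : (1 - 1 / 2) *: (x + s *: tau) + 1 / 2 *: (x + - s *: tau) = x.
  rewrite !scalerDr !scalerA addrACA -!scalerDl.
  have -> : (1 - 1 / 2 + 1 / 2 : R) = 1 by field.
  have -> : ((1 - 1 / 2) * s + 1 / 2 * - s : R) = 0 by field.
  by rewrite scale1r scale0r addr0.
by rewrite rx0 ltxx.
Qed.
Lemma EPS (V : normedModType R) (f : V -> R) x :
  differentiable f x -> forall e, 0 < e -> exists2 d, 0 < d &
  forall z, `|z| < d -> `|f (x + z) - f x - 'd f x z| <= e * `|z|.
Proof.
move=> df e e0.
have H := diff_locallyxC df.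
have H2 : (fun h => f (x + h)) = (fun h => f x + 'd f x h) +o_ (nbhs (0:V)) id.
  apply/eqaddoE; rewrite funeqE => h; exact: H.
move/eqaddoP: H2 => /(_ e e0) /nbhs_norm0P [d d0 Hd].
exists d => // z zd; have := Hd z zd => /=.
by rewrite opprD addrA.
Qed.
Arguments EPS {V f x}.
Lemma small0 (m C : R) : 0 <= C ->
  (forall e, 0 < e -> e <= 1 -> `|m| <= e * C) -> m = 0.
Proof.
move=> C0 H; apply/eqP; rewrite -normr_eq0; apply/negP => /negP mn0.
have m0 : 0 < `|m| by rewrite normr_gt0 -normr_eq0.
set e := Num.min 1 (`|m| / (C + 1)).
have e0 : 0 < e by rewrite lt_min ltr01 divr_gt0 // ltr_wpDl.
have e1 : e <= 1 by rewrite ge_min lexx.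
have := H e e0 e1.
have : e * C < `|m|.
  apply: (le_lt_trans (y := `|m| / (C + 1) * C)).
    by apply: ler_wpM2r => //; rewrite ge_min lexx orbT.
  rewrite mulrAC ltr_pdivrMr ?ltr_wpDl // ltr_pM2l //; lra.
by move=> h1 h2; have := lt_le_trans h1 h2; rewrite ltxx.
Qed.

Lemma TAN (V : normedModType R) (rho hh : V -> R) x N tau :
 continuous rho -> differentiable rho x -> differentiable hh x ->
 (forall y, rho y = 0 -> hh y = 0) -> rho x = 0 ->
 0 < 'd rho x N -> 'd rho x tau = 0 -> 'd hh x tau = 0.
Proof.
move=> crho drho dhh Hz rx0 p0 t0.
set p := 'd rho x N; set q := 'd hh x N; set m := 'd hh x tau.
set K := `|tau| + `|N| + 1.
have K0 : 0 < K by rewrite /K ltr_wpDl // addr_ge0.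
apply: (@small0 _ (`|q| + K)); first by rewrite addr_ge0 // ltW.
move=> e e0 e1.
have e10 : 0 < e * p / (2 * K) by rewrite !divr_gt0 ?mulr_gt0.
have [d1 d10 H1] := EPS drho _ e10.
have [d2 d20 H2] := EPS dhh _ e0.
set a := Num.min d1 d2 / (2 * K).
have a0 : 0 < a by rewrite divr_gt0 ?mulr_gt0 // lt_min d10.
have aK : a * K < Num.min d1 d2.
  have mn0 : 0 < Num.min d1 d2 by rewrite lt_min d10.
  have -> : a * K = Num.min d1 d2 / 2 by rewrite /a; field; rewrite gt_eqF.
  lra.
clearbody a.
have nz : forall b, `|b| <= e * a -> `|a *: tau + b *: N| <= a * K.
  move=> b hb; apply: (le_trans (ler_normD _ _)); rewrite !normrZ gtr0_norm //.
  have : `|b| * `|N| <= a * `|N|.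
    apply: ler_wpM2r => //; apply: (le_trans hb); nra.
  rewrite /K => hh'; have := normr_ge0 tau; have := normr_ge0 N; nra.
have zd1 : forall b, `|b| <= e * a -> `|a *: tau + b *: N| < d1.
  move=> b hb; apply: (le_lt_trans (nz b hb)); apply: (lt_le_trans aK).
  by rewrite ge_min lexx.
have zd2 : forall b, `|b| <= e * a -> `|a *: tau + b *: N| < d2.
  move=> b hb; apply: (le_lt_trans (nz b hb)); apply: (lt_le_trans aK).
  by rewrite ge_min lexx orbT.
have dz : forall b, 'd rho x (a *: tau + b *: N) = b * p.
  by move=> b; rewrite linearD !linearZ /= t0 scaler0 add0r.
have rb : forall b, `|b| <= e * a ->
   `|rho (x + (a *: tau + b *: N)) - b * p| <= e * p / 2 * a.
  move=> b hb; have := H1 _ (zd1 b hb); rewrite rx0 subr0 dz => h.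
  apply: (le_trans h); have := nz b hb.
  have -> : e * p / 2 * a = e * p / (2 * K) * (a * K).
    by field; rewrite gt_eqF.
  by move=> hh'; apply: ler_wpM2l => //; apply: ltW.
set phi := fun b : R => rho (x + (a *: tau + b *: N)).
have ea0 : 0 < e * a by rewrite mulr_gt0.
have hp : 0 < phi (e * a).
  have hb1 : `|e * a| <= e * a by rewrite ger0_norm // ltW.
  have /ler_normlP [h _] := rb _ hb1.
  have : 0 < e * p / 2 * a by rewrite mulr_gt0 // divr_gt0 // mulr_gt0.
  rewrite /phi; nra.
have hm : phi (- (e * a)) < 0.
  have hb1 : `|- (e * a)| <= e * a by rewrite normrN ger0_norm // ltW.
  have /ler_normlP [_ h] := rb _ hb1.
  have : 0 < e * p / 2 * a by rewrite mulr_gt0 // divr_gt0 // mulr_gt0.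
  rewrite /phi; nra.
have cphi : {within `[- (e * a), e * a], continuous phi}.
  apply: continuous_subspaceT => b; apply: continuous_comp; last exact: crho.
  apply: continuousD; first exact: cst_continuous.
  apply: continuousD; first exact: cst_continuous.
  exact: scalel_continuous.
have lea : - (e * a) <= e * a by lra.
have hv : Num.min (phi (- (e * a))) (phi (e * a)) <= 0 <= Num.max (phi (- (e * a))) (phi (e * a)).
  by rewrite ge_min le_max (ltW hm) (ltW hp) orbT.
have [b bi phib] := IVT lea cphi hv.
have hb : `|b| <= e * a.
  by move: bi; rewrite in_itv /= => /andP [h1 h2]; apply/ler_normlP; split; lra.
have h0 : hh (x + (a *: tau + b *: N)) = 0 by apply: Hz.
have hx0 : hh x = 0 by apply: Hz.
have := H2 _ (zd2 b hb); rewrite h0 hx0 subr0 sub0r normrN linearD !linearZ /= -/m -/q.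
move=> H3.
have H4 : `|a * m + b * q| <= e * (a * K).
  apply: (le_trans H3); apply: ler_wpM2l; [exact: ltW | exact: nz].
have H5 : `|b * q| <= e * a * `|q| by rewrite normrM; apply: ler_wpM2r.
have H6 : a * `|m| <= e * a * `|q| + e * (a * K).
  have : `|a * m| <= `|a * m + b * q| + `|b * q|.
    by rewrite -[X in `|X|](addrK (b * q)); apply: (le_trans (ler_normB _ _)).
  rewrite normrM gtr0_norm //; lra.
have : a * `|m| <= a * (e * (`|q| + K)) by lra.
by rewrite ler_pM2l.
Qed.
Lemma KEY (V : normedModType R) (w : V -> R) x a b r0 :
  0 < r0 -> (forall z, `|z| < r0 -> differentiable w (x + z)) ->
  differentiable (fun y => 'D_b w y) x ->
  forall e, 0 < e -> exists2 d, 0 < d & forall s, 0 < s -> s < d ->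
   `|w (x + (s *: a + s *: b)) - w (x + s *: a) - w (x + s *: b) + w x
      - s ^+ 2 * 'd (fun y => 'D_b w y) x a| <= e * s ^+ 2 * (2 * (`|a| + `|b|)).
Proof.
move=> r00 Hw dG e e0.
set G := fun y => 'D_b w y.
set L := 'd G x.
have [d1 d10 H1] := EPS dG _ e0.
set C := `|a| + `|b| + 1.
have C0 : 0 < C by rewrite /C ltr_wpDl // addr_ge0.
exists (Num.min d1 r0 / C); first by rewrite divr_gt0 // lt_min d10.
move=> s s0 sd.
have sC : s * (`|a| + `|b|) < Num.min d1 r0.
  apply: (le_lt_trans (y := s * C)); first by rewrite ler_pM2l // /C lerDl.
  by rewrite -ltr_pdivlMr.
have na : forall c, 0 <= c <= s -> `|s *: a + c *: b| <= s * (`|a| + `|b|).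
  move=> c /andP [c0 cs]; apply: (le_trans (ler_normD _ _)); rewrite !normrZ.
  rewrite (ger0_norm (ltW s0)) (ger0_norm c0) mulrDr lerD2l.
  by apply: ler_wpM2r.
have nb : forall c, 0 <= c <= s -> `|c *: b| <= s * (`|a| + `|b|).
  move=> c /andP [c0 cs]; rewrite normrZ (ger0_norm c0).
  apply: (le_trans (y := s * `|b|)); first by apply: ler_wpM2r.
  by rewrite ler_pM2l // lerDr.
have lt1 : forall z : V, `|z| <= s * (`|a| + `|b|) -> `|z| < d1.
  by move=> z hz; apply: (le_lt_trans hz); apply: (lt_le_trans sC); rewrite ge_min lexx.
have lt2 : forall z : V, `|z| <= s * (`|a| + `|b|) -> `|z| < r0.
  by move=> z hz; apply: (le_lt_trans hz); apply: (lt_le_trans sC); rewrite ge_min lexx orbT.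
set phi := fun r : R => w ((x + s *: a) + r *: b) - w (x + r *: b).
have phid : forall r, 0 <= r <= s ->
    is_derive r 1 phi (G (x + s *: a + r *: b) - G (x + r *: b)).
  move=> r hr; rewrite /phi /G.
  apply: is_deriveB; apply: LINE; apply: diff_derivable.
    by rewrite -addrA; apply: Hw; apply: lt2; apply: na.
  by apply: Hw; apply: lt2; apply: nb.
have phid1 : forall r, r \in `]0, s[ -> is_derive r 1 phi (G (x + s *: a + r *: b) - G (x + r *: b)).
  move=> r; rewrite in_itv /= => /andP [h1 h2]; apply: phid.
  by apply/andP; split; apply: ltW.
have phic : {within `[0, s], continuous phi}.
  apply: derivable_within_continuous => r; rewrite in_itv /= => hr.
  by have [] := phid r hr.
have [c ci Ec] := MVT s0 phid1 phic.
have cs : 0 <= c <= s by move: ci; rewrite in_itv /= => /andP [h1 h2]; apply/andP; split; apply: ltW.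
have Edelta : w (x + (s *: a + s *: b)) - w (x + s *: a) - w (x + s *: b) + w x = phi s - phi 0.
  rewrite /phi /= !scale0r !addr0 -[x + s *: a + s *: b]addrA; ring.
rewrite Edelta Ec subr0.
have E1 := H1 _ (lt1 _ (na c cs)).
have E2 := H1 _ (lt1 _ (nb c cs)).
rewrite -/L in E1 E2.
have sc : forall k y : R, k *: y = k * y by [].
have -> : G (x + s *: a + c *: b) - G (x + c *: b) = 
   (G (x + (s *: a + c *: b)) - G x - L (s *: a + c *: b)) - (G (x + c *: b) - G x - L (c *: b)) + s * L a.
  rewrite linearD !linearZ /= addrA !sc; ring.
rewrite -/G in E1 E2.
move: E1 E2 (na c cs) (nb c cs).
set A := G (x + (s *: a + c *: b)) - G x - L (s *: a + c *: b).
set B := G (x + c *: b) - G x - L (c *: b).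
move=> E1 E2 N1 N2.
have -> : (A - B + s * L a) * s - s ^+ 2 * L a = (A - B) * s by ring.
rewrite normrM (ger0_norm (ltW s0)).
have HA : `|A| <= e * (s * (`|a| + `|b|)) by apply: (le_trans E1); apply: ler_wpM2l => //; apply: ltW.
have HB : `|B| <= e * (s * (`|a| + `|b|)) by apply: (le_trans E2); apply: ler_wpM2l => //; apply: ltW.
have HAB : `|A - B| <= `|A| + `|B| by apply: ler_normB.
have : `|A - B| * s <= 2 * e * (s * (`|a| + `|b|)) * s by apply: ler_wpM2r; [exact: ltW | lra].
by move=> h; apply: (le_trans h); rewrite le_eqVlt; apply/orP; left; apply/eqP; ring.
Qed.
Lemma SCHaux (V : normedModType R) (w : V -> R) x a b (P Q : R) :
  (forall e, 0 < e -> exists2 d, 0 < d & forall s, 0 < s -> s < d ->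
   `|w (x + (s *: a + s *: b)) - w (x + s *: a) - w (x + s *: b) + w x
      - s ^+ 2 * P| <= e * s ^+ 2 * (2 * (`|a| + `|b|))) ->
  (forall e, 0 < e -> exists2 d, 0 < d & forall s, 0 < s -> s < d ->
   `|w (x + (s *: b + s *: a)) - w (x + s *: b) - w (x + s *: a) + w x
      - s ^+ 2 * Q| <= e * s ^+ 2 * (2 * (`|b| + `|a|))) ->
  P = Q.
Proof.
move=> H1 H2.
apply/eqP; rewrite -subr_eq0; apply/eqP.
apply: (@small0 _ (2 * (2 * (`|a| + `|b|)))); first by rewrite !mulr_ge0 // addr_ge0.
move=> e e0 _.
have [d1 d10 {}H1] := H1 e e0.
have [d2 d20 {}H2] := H2 e e0.
set s := Num.min d1 d2 / 2.
have m0 : 0 < Num.min d1 d2 by rewrite lt_min d10.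
have s0 : 0 < s by rewrite divr_gt0.
have s1 : s < d1 by apply: (lt_le_trans (y := Num.min d1 d2)); [rewrite /s; lra | rewrite ge_min lexx].
have s2 : s < d2 by apply: (lt_le_trans (y := Num.min d1 d2)); [rewrite /s; lra | rewrite ge_min lexx orbT].
have E1 := H1 s s0 s1; have E2 := H2 s s0 s2.
rewrite [s *: b + s *: a]addrC [`|b| + `|a|]addrC in E2.
move: E1 E2.
set Dl := w (x + (s *: a + s *: b)) - w (x + s *: a) - w (x + s *: b) + w x.
have -> : w (x + (s *: a + s *: b)) - w (x + s *: b) - w (x + s *: a) + w x = Dl.
  by rewrite /Dl; ring.
move=> E1 E2.
have s20 : 0 < s ^+ 2 by rewrite exprn_gt0.
have : s ^+ 2 * `|P - Q| <= s ^+ 2 * (e * (2 * (2 * (`|a| + `|b|)))).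
  have -> : s ^+ 2 * `|P - Q| = `|s ^+ 2 * (P - Q)| by rewrite normrM ger0_norm // ltW.
  have -> : s ^+ 2 * (P - Q) = (Dl - s ^+ 2 * Q) - (Dl - s ^+ 2 * P) by ring.
  have -> : s ^+ 2 * (e * (2 * (2 * (`|a| + `|b|)))) =
     e * s ^+ 2 * (2 * (`|a| + `|b|)) + e * s ^+ 2 * (2 * (`|a| + `|b|)) by ring.
  by apply: (le_trans (ler_normB _ _)); apply: lerD.
by move=> h; rewrite -(ler_pM2l s20).
Qed.
Lemma SCH (V : normedModType R) (w : V -> R) x a b r0 :
  0 < r0 -> (forall z, `|z| < r0 -> differentiable w (x + z)) ->
  differentiable (fun y => 'D_b w y) x -> differentiable (fun y => 'D_a w y) x ->
  'D_a (fun y => 'D_b w y) x = 'D_b (fun y => 'D_a w y) x.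
Proof.
move=> r00 Hw db da; rewrite !deriveE //.
exact: (@SCHaux _ w x a b _ _ (@KEY _ w x a b r0 r00 Hw db) (@KEY _ w x b a r0 r00 Hw da)).
Qed.
Lemma DLQ (V : normedModType R) (f : V -> R) x v :
  (fun h : R => h^-1 *: (((fun r : R => f (x + r *: v)) \o shift 0) (h *: 1)
           - (fun r : R => f (x + r *: v)) 0)) =
  (fun h => h^-1 *: ((f \o shift x) (h *: v) - f x)).
Proof.
apply/funext => h /=; congr (_ *: (f _ - f _)).
  have -> : (h%:A + 0 : R) = h by rewrite addr0 /GRing.scale /= mulr1.
  by rewrite addrC.
by rewrite scale0r addr0.
Qed.

Lemma DL0 (V : normedModType R) (f : V -> R) x v :
  'D_v f x = 'D_1 (fun r : R => f (x + r *: v)) 0.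
Proof. by rewrite /derive DLQ. Qed.

Lemma DL0d (V : normedModType R) (f : V -> R) x v :
  derivable f x v -> derivable (fun r : R => f (x + r *: v)) 0 1.
Proof. by rewrite /derivable DLQ. Qed.

Lemma CHAIN (V : normedModType R) (S : V -> R) x v :
  derivable S x v -> 0 < S x ->
  'D_v (fun y => Num.sqrt (S y)) x = (2 * Num.sqrt (S x))^-1 * 'D_v S x.
Proof.
move=> dS S0.
rewrite (@DL0 V (fun y => Num.sqrt (S y))) (@DL0 V S) -!derive1E.
have -> : (fun r : R => Num.sqrt (S (x + r *: v))) = Num.sqrt \o (fun r : R => S (x + r *: v)) by [].
rewrite derive1_comp; last first.
  by rewrite /= scale0r addr0; have [] := is_derive1_sqrt S0.
  exact: DL0d.
by rewrite /= scale0r addr0 derive1E derive_sqrt.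
Qed.

Lemma DSUM (V : normedModType R) n (f g : 'I_n -> V -> R) x v :
  (forall i, derivable (f i) x v) -> (forall i, derivable (g i) x v) ->
  derivable (fun y => \sum_(i < n) f i y * g i y) x v /\
  'D_v (fun y => \sum_(i < n) f i y * g i y) x =
    \sum_(i < n) ('D_v (f i) x * g i x + f i x * 'D_v (g i) x).
Proof.
move=> df dg.
have -> : (fun y => \sum_(i < n) f i y * g i y) = \sum_(i < n) (f i * g i).
  by rewrite fct_sumE.
have dfg : forall i, derivable (f i * g i) x v by move=> i; apply: derivableM.
split; first exact: derivable_sum.
rewrite derive_sum //; apply: eq_bigr => i _; rewrite deriveM //.
by rewrite /GRing.scale /= addrC mulrC; congr (_ + _); rewrite mulrC.
Qed.

Lemma DADD1 (V : normedModType R) (F : V -> R) x v :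
  derivable F x v -> 'D_v (fun y => 1 + F y) x = 'D_v F x /\ derivable (fun y => 1 + F y) x v.
Proof.
move=> dF; have -> : (fun y => 1 + F y) = cst 1 + F by [].
split; last by apply: derivableD => //; apply: derivable_cst.
by rewrite deriveD ?derive_cst ?add0r //; apply: derivable_cst.
Qed.
Lemma mul_self_ge0 (x : R) : 0 <= x * x.
Proof. by rewrite -expr2 sqr_ge0. Qed.

Lemma dotvZr n (a b : 'rV[R]_n) k : dotv a (k *: b) = k * dotv a b.
Proof. by rewrite /dotv mulr_sumr; apply: eq_bigr => i _; rewrite mxE mulrCA. Qed.
Lemma dotvZl n (a b : 'rV[R]_n) k : dotv (k *: a) b = k * dotv a b.
Proof. by rewrite /dotv mulr_sumr; apply: eq_bigr => i _; rewrite mxE mulrA. Qed.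
Lemma dotvBl n (a b c : 'rV[R]_n) : dotv (a - b) c = dotv a c - dotv b c.
Proof. by rewrite /dotv -sumrB; apply: eq_bigr => i _; rewrite !mxE mulrBl. Qed.
Lemma dotvNl n (a c : 'rV[R]_n) : dotv (- a) c = - dotv a c.
Proof. by rewrite /dotv -sumrN; apply: eq_bigr => i _; rewrite !mxE mulNr. Qed.
Lemma dotv0r n (a : 'rV[R]_n) : dotv a 0 = 0.
Proof. by rewrite /dotv big1 // => i _; rewrite mxE mulr0. Qed.
Lemma dotv_row_mx n m (a1 b1 : 'rV[R]_n) (a2 b2 : 'rV[R]_m) :
  dotv (row_mx a1 a2) (row_mx b1 b2) = dotv a1 b1 + dotv a2 b2.
Proof.
by rewrite /dotv big_split_ord /=; congr (_ + _); apply: eq_bigr => i _;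
  rewrite ?row_mxEl ?row_mxEr.
Qed.
Lemma dotv_gt0 n (a : 'rV[R]_n) : a != 0 -> 0 < dotv a a.
Proof.
move=> an0; rewrite lt_def; apply/andP; split; last first.
  by apply: sumr_ge0 => i _; apply: mul_self_ge0.
apply/negP => /eqP /psumr_eq0P H; move/negP: an0; apply; apply/eqP/rowP => i.
have := H (fun i _ => mul_self_ge0 _) i isT => /eqP; rewrite mulf_eq0 orbb mxE => /eqP //.
Qed.
End S.
Arguments dotv_gt0 {R n a}.
Arguments TAN {R V rho hh x N tau}.
Arguments CONV {R V rho x tau}.
Arguments SCH {R V w x a b r0}.
Arguments DADD1 {R V F x v}.
Arguments CHAIN {R V S x v}.
Arguments DEC {R n f x v}.

Theorem mainTheorem4 (R : realType) (n : nat)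
  (rho : 'rV[R]_n -> R)
  (f : 'rV[R]_n -> R -> R -> 'rV[R]_(n + 1))
  (u : 'rV[R]_n -> R -> R) :
  smooth_bounded_convex_domain rho ->
  (* u(.,t) is C^2 up to the boundary, for each t > 0 *)
  (forall t : R, 0 < t -> exists U : set 'rV[R]_n,
      open U /\ [set x | rho x <= 0] `<=` U /\ Ck_on U 2 (fun y => u y t)) ->
  (* u is differentiable in t inside Omega, t > 0 *)
  (forall x t, rho x < 0 -> 0 < t -> derivable (fun s => u x s) t 1) ->
  (* the PDE *)
  (forall x t, rho x < 0 -> 0 < t ->
     derive1 (fun s => u x s) t / vfun u x t =
     divg (fun y => (vfun u y t)^-1 *: du u y t) x
     + dotv (f x (u x t) t) (nvec u x t)) ->
  (* Neumann boundary condition *)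
  (forall x t, rho x = 0 -> 0 < t -> dotv (du u x t) (onormal rho x) = 0) ->
  forall x t, rho x = 0 -> 0 < t ->
    dotv (DGamma_v u x t) (cyl_normal rho x) <= 0.
Proof.
move=> [sm gnz _ cvx _] Hreg _ _ Hn x t rx0 t0.
have [U [oU [sU [dwU Hg]]]] := Hreg t t0.
set w := fun y => u y t in dwU Hg.
have Ux : U x by apply: sU; rewrite /= rx0.
have [r0 r00 Hr] : exists2 r0 : R, 0 < r0 & forall z, `|z| < r0 -> U (x + z).
  have : nbhs x U by apply: open_nbhs_nbhs; split.
  move=> /nbhs_normP [r r0 H]; exists r => // z zr; apply: H.
  by rewrite /ball_ /= opprD addrA subrr sub0r normrN.
have dw : forall z, `|z| < r0 -> differentiable w (x + z) by move=> z /Hr /dwU.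
have dg : forall i, differentiable (pd i w) x by move=> i; apply: (Hg i).1.
have [drho0 Hr2] := sm 2%N.
have drho : forall y, differentiable rho y by move=> y; apply: drho0.
have dr1 : forall i y, differentiable (pd i rho) y by move=> i y; apply: (Hr2 i).1.
have crho : continuous rho by move=> y; apply: (sm 0%N).
set N := grad rho x.
set tau := du u x t.
have tauE : forall i, tau 0 i = pd i w x by move=> i; rewrite /tau /du /grad mxE.
have NE : forall i, N 0 i = pd i rho x by move=> i; rewrite /N /grad mxE.
set h := fun y => \sum_(i < n) pd i w y * pd i rho y.
have Hz : forall y, rho y = 0 -> h y = 0.
  move=> y ry; have := Hn y t ry t0.
  rewrite /onormal dotvZr => /eqP; rewrite mulf_eq0 invr_eq0 => /orP [|/eqP].
    rewrite sqrtr_eq0 => H; have := dotv_gt0 (gnz y ry).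
    by rewrite ltNge H.
  by move=> H; rewrite -[RHS]H /dotv /h /du /grad; apply: eq_bigr => i _; rewrite !mxE.
have hx0 : h x = 0 := Hz x rx0.
have dh : differentiable h x.
  have -> : h = \sum_(i < n) (pd i w * pd i rho) by rewrite fct_sumE.
  by apply: differentiable_sum => i; apply: differentiableM.
have Dtau_rho : 'D_tau rho x = h x.
  by rewrite DEC //; apply: eq_bigr => i _; rewrite tauE.
have DN_rho : 0 < 'D_N rho x.
  rewrite DEC //.
  suff -> : \sum_(j < n) N 0 j * pd j rho x = dotv N N by apply: dotv_gt0; apply: gnz.
  by rewrite /dotv; apply: eq_bigr => i _; rewrite NE.
have Dh : 'D_tau h x = 0.
  rewrite deriveE //; apply: (TAN crho (drho x) dh Hz rx0 (N := N)).
    by rewrite -deriveE.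
  by rewrite -deriveE // Dtau_rho.
have [_ Dh2] := @DSUM R _ n (fun i => pd i w) (fun i => pd i rho) x tau
   (fun i => diff_derivable (dg i)) (fun i => diff_derivable (dr1 i x)).
rewrite -/h Dh /= in Dh2.
have GE : (fun y => 'D_tau rho y) = (fun y => \sum_(i < n) cst (tau 0 i) y * pd i rho y).
  by apply/funext => y; rewrite DEC.
have [dG DG] := @DSUM R _ n (fun i => cst (tau 0 i)) (fun i => pd i rho) x tau
   (fun i => derivable_cst _ _ _) (fun i => diff_derivable (dr1 i x)).
have Q0 : 0 <= 'D_tau (fun y => 'D_tau rho y) x.
  apply: (CONV drho) => //.
  - by move=> y z l hy hz l0 l1; apply: (cvx y z hy hz l l0 l1).
  - by rewrite Dtau_rho hx0.
  - by rewrite GE.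
rewrite GE DG in Q0.
have Qeq : \sum_(i < n) ('D_tau (cst (tau 0 i)) x * pd i rho x + cst (tau 0 i) x * 'D_tau (pd i rho) x)
   = \sum_(i < n) pd i w x * 'D_tau (pd i rho) x.
  by apply: eq_bigr => i _; rewrite derive_cst mul0r add0r tauE.
rewrite Qeq in Q0.
rewrite big_split /= in Dh2.
set S := fun y => 1 + \sum_(i < n) pd i w y * pd i w y.
have VE : (fun y => vfun u y t) = fun y => Num.sqrt (S y).
  apply/funext => y; rewrite /vfun /S /dotv /du /grad; congr (Num.sqrt (1 + _)).
  by apply: eq_bigr => i _; rewrite !mxE.
have Sx0 : 0 < S x.
  rewrite /S; have : 0 <= \sum_(i < n) pd i w x * pd i w x.
    by apply: sumr_ge0 => i _; apply: mul_self_ge0.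
  by move=> hh; apply: (lt_le_trans ltr01); rewrite lerDl.
set k := (2 * Num.sqrt (S x))^-1.
have k0 : 0 < k by rewrite invr_gt0 mulr_gt0 // sqrtr_gt0.
have step : forall j, pd j (fun y => vfun u y t) x = k * (2 * 'D_tau (pd j w) x).
  move=> j; change ('D_(@evec R n j) (fun y => vfun u y t) x = k * (2 * 'D_tau (pd j w) x)).
  rewrite VE.
  have [dS DS] := @DSUM R _ n (fun i => pd i w) (fun i => pd i w) x (@evec R n j)
     (fun i => diff_derivable (dg i)) (fun i => diff_derivable (dg i)).
  have [DS1 dS1] := DADD1 dS.
  rewrite CHAIN // -/k; congr (_ * _).
  have e1 : 'D_(@evec R n j) S x = \sum_(i < n) ('D_(@evec R n j) (pd i w) x * pd i w x
       + pd i w x * 'D_(@evec R n j) (pd i w) x) := etrans DS1 DS.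
  have e2 : 'D_tau (pd j w) x = \sum_(i < n) tau 0 i * pd i (pd j w) x := DEC (dg j).
  rewrite e1 e2 mulr_sumr; apply: eq_bigr => i _.
  rewrite tauE.
  have -> : 'D_(@evec R n j) (pd i w) x = pd i (pd j w) x := SCH r00 dw (dg i) (dg j).
  ring.
rewrite /DGamma_v dotvBl dotvZl.
have nn : dotv (nvec u x t) (cyl_normal rho x) = 0.
  by rewrite /nvec /cyl_normal dotvZl dotv_row_mx dotvNl dotv0r addr0 Hn // oppr0 mulr0.
rewrite nn mulr0 subr0 /Dv /cyl_normal dotv_row_mx dotv0r addr0 /onormal dotvZr.
apply: mulr_ge0_le0; first by rewrite invr_ge0 sqrtr_ge0.
rewrite -/N.
have -> : dotv (grad (fun y => vfun u y t) x) N =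
    k * 2 * \sum_(j < n) 'D_tau (pd j w) x * pd j rho x.
  rewrite /dotv mulr_sumr; apply: eq_bigr => j _; rewrite mxE step NE; ring.
rewrite pmulr_rle0 ?mulr_gt0 //.
move: Dh2 Q0; set A := \sum_(j < n) _; set B := \sum_(i < n) _.
move=> Dhh Qq; have -> : A = (A + B) - B by ring.
by rewrite -Dhh sub0r oppr_le0.
Qed.
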